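(* Suppose $\sigma$ is an automorphism of $D$ and $f(t)=t^m-a\in D[t;\sigma]$ with $a\in D$. Then $f$ has a left divisor of degree $1$ if and only if it has a right divisor of degree $1$.
   Context: $D$ is an associative division ring, $\sigma$ a ring automorphism of $D$, and $D[t;\sigma]$ the skew polynomial ring with $ta=\sigma(a)t$. A left (resp. right) divisor $g$ of $f$ means $f=gq$ (resp. $f=qg$) for some $q\in D[t;\sigma]$. *)

(* Defs.v *)
From HB Require Import structures.
From mathcomp Require Import all_boot all_order all_algebra.
Set Implicit Arguments. Unset Strict Implicit. Unset Printing Implicit Defensive.
Import GRing.Theory.
Local Open Scope ring_scope.

(* Skew polynomial ring D[t; sigma] with t a = sigma(a) t.
   Elements are represented by their coefficient sequences, reusing the
   additive structure of {poly D}: p = \sum_i p`_i t^i.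
   Skew multiplication: (p q)_k = \sum_{i+j=k} p_i sigma^i(q_j),
   since (p_i t^i)(q_j t^j) = p_i sigma^i(q_j) t^(i+j). *)

Definition is_division_ring (D : unitRingType) : Prop :=
  forall x : D, x != 0 -> x \is a GRing.unit.

Definition skew_mul (D : nzRingType) (sigma : D -> D) (p q : {poly D}) : {poly D} :=
  \poly_(k < size p + size q)
     \sum_(i < k.+1) p`_i * iter i sigma (q`_(k - i)).

Definition skew_left_divisor (D : nzRingType) (sigma : D -> D) (g f : {poly D}) : Prop :=
  exists h : {poly D}, f = skew_mul sigma g h.

Definition skew_right_divisor (D : nzRingType) (sigma : D -> D) (g f : {poly D}) : Prop :=
  exists h : {poly D}, f = skew_mul sigma h g.

(* Main.v *)
Require Import Defs.
From HB Require Import structures.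
From mathcomp Require Import all_boot all_order all_algebra.
From mathcomp Require Import zify.
Import GRing.Theory.
Local Open Scope ring_scope.

Lemma iterS0 (D : unitRingType) (s : {rmorphism D -> D}) n : iter n s 0 = 0.
Proof. by elim: n => //= n ->; rewrite rmorph0. Qed.
Lemma iterS1 (D : unitRingType) (s : {rmorphism D -> D}) n : iter n s 1 = 1.
Proof. by elim: n => //= n ->; rewrite rmorph1. Qed.
Lemma iterSM (D : unitRingType) (s : {rmorphism D -> D}) n x y :
  iter n s (x * y) = iter n s x * iter n s y.
Proof. by elim: n => //= n ->; rewrite rmorphM. Qed.
Lemma iterSN (D : unitRingType) (s : {rmorphism D -> D}) n x :
  iter n s (- x) = - iter n s x.
Proof. by elim: n => //= n ->; rewrite rmorphN. Qed.
Lemma iterSC (D : Type) (s : D -> D) n x : s (iter n s x) = iter n s (s x).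
Proof. by rewrite -[LHS]/(iter n.+1 s x) iterSr. Qed.

Lemma coef_skew (D : unitRingType) (s : {rmorphism D -> D}) (p q : {poly D}) k :
  (skew_mul s p q)`_k = \sum_(i < k.+1) p`_i * iter i s (q`_(k - i)).
Proof.
rewrite /skew_mul coef_poly; case: ltnP => // hk.
rewrite big1 // => i _.
case: (ltnP i (size p)) => hi.
  rewrite (nth_default 0 (_ : (size q <= k - i)%N)) ?iterS0 ?mulr0 //. move: hk hi; move: (nat_of_ord i) (size p) (size q) => a b c; lia.
by rewrite nth_default ?mul0r.
Qed.

Lemma skew0 (D : unitRingType) (s : {rmorphism D -> D}) (p q : {poly D}) :
  (skew_mul s p q)`_0 = p`_0 * q`_0.
Proof. by rewrite coef_skew big_ord1. Qed.

Lemma skewRS (D : unitRingType) (s : {rmorphism D -> D}) (h g : {poly D}) k :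
  (size g <= 2)%N ->
  (skew_mul s h g)`_k.+1 = h`_k.+1 * iter k.+1 s g`_0 + h`_k * iter k s g`_1.
Proof.
move=> sg; rewrite coef_skew big_ord_recr /= subnn big_ord_recr /= subSnn.
rewrite big1 ?add0r; first by rewrite addrC.
move=> i _; rewrite (nth_default _ (_ : (size g <= _)%N)) ?iterS0 ?mulr0 //.
have := ltn_ord i; move: (nat_of_ord i) => a; lia.
Qed.

Lemma skewLS (D : unitRingType) (s : {rmorphism D -> D}) (g h : {poly D}) k :
  (size g <= 2)%N ->
  (skew_mul s g h)`_k.+1 = g`_0 * h`_k.+1 + g`_1 * s (h`_k).
Proof.
move=> sg; rewrite coef_skew big_ord_recl /= subn0 big_ord_recl /=.
rewrite big1 ?addr0.
  by rewrite /bump /= subSS subn0.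
move=> i _; rewrite (nth_default _ (_ : (size g <= _)%N)) ?mul0r //.
by apply: leq_trans sg _; rewrite /bump /= !add1n.
Qed.

Fixpoint Nm {D : unitRingType} (s : D -> D) (n : nat) (b : D) : D :=
  match n with 0 => 1 | n'.+1 => iter n' s b * Nm s n' b end.

Lemma Nm_s (D : unitRingType) (s : {rmorphism D -> D}) n b :
  s (Nm s n b) = Nm s n (s b).
Proof. by elim: n => [|n IH] /=; rewrite ?rmorph1 // rmorphM IH iterSC. Qed.

Lemma Nm_iter (D : unitRingType) (s : {rmorphism D -> D}) k n b :
  iter k s (Nm s n b) = Nm s n (iter k s b).
Proof. by elim: k => //= k ->; rewrite Nm_s. Qed.

Lemma Nm_Sr (D : unitRingType) (s : {rmorphism D -> D}) n b :
  Nm s n.+1 b = Nm s n (s b) * b.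
Proof.
elim: n => [|n IH]; first by rewrite /= mul1r mulr1.
by rewrite -[LHS]/(iter n.+1 s b * Nm s n.+1 b) IH mulrA -[RHS]/(iter n s (s b) * Nm s n (s b) * b) -iterSr.
Qed.

Lemma coef_f (D : unitRingType) m (a : D) k :
  ('X^m - a%:P)`_k = (k == m)%:R - (if k == 0%N then a else 0).
Proof. by rewrite coefB coefXn coefC. Qed.

Lemma right_of_N (D : unitRingType) (s : {rmorphism D -> D}) m a b :
  Nm s m b = a -> skew_right_divisor s ('X - b%:P) ('X^m - a%:P).
Proof.
move=> hN; exists (\poly_(k < m) Nm s (m.-1 - k) (iter k.+1 s b)).
have sg : (size ('X - b%:P)%R <= 2)%N by rewrite size_XsubC.
apply/polyP => -[|k]; rewrite ?skew0 ?skewRS // coef_f !coefB !coefX !coefC !coef_poly /=.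
  clear sg; case: m hN => [|m] hN /=.
    by rewrite -hN /= subrr mul0r.
  by rewrite subn0 -hN Nm_Sr !sub0r mulrN.
rewrite !subr0 !sub0r iterSN rmorphN iterS1 mulr1 mulrN.
case: (ltngtP k.+1 m) => h.
- rewrite (_ : (m.-1 - k)%N = (m.-1 - k.+1).+1); last by lia.
  by rewrite Nm_Sr addrC subrr.
- by rewrite !mul0r oppr0 addr0.
- subst m; rewrite /= subnn mul0r oppr0 add0r //.
Qed.

Lemma left_of_N (D : unitRingType) (s : {rmorphism D -> D}) m a b :
  Nm s m b = a -> skew_left_divisor s ('X - (iter m.-1 s b)%:P) ('X^m - a%:P).
Proof.
move=> hN; exists (\poly_(k < m) Nm s (m.-1 - k) (iter k s b)).
have sg : (size ('X - (iter m.-1 s b)%:P)%R <= 2)%N by rewrite size_XsubC.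
apply/polyP => -[|k]; rewrite ?skew0 ?skewLS // coef_f !coefB !coefX !coefC !coef_poly /=.
  clear sg; case: m hN => [|m] hN /=.
    by rewrite -hN /= subrr mulr0.
  by rewrite subn0 -hN !sub0r mulNr.
rewrite !subr0 !sub0r mul1r mulNr.
case: (ltngtP k.+1 m) => h.
  rewrite (_ : (m.-1 - k)%N = (m.-1 - k.+1).+1); last by lia.
  rewrite Nm_s [Nm s _.+1 _]/= -[s (iter k s b)]/(iter k.+1 s b) -iterD.
  rewrite (_ : (m.-1 - k.+1 + k.+1)%N = m.-1); last by lia.
  by rewrite addNr.
- rewrite mulr0 oppr0 add0r; symmetry; exact: rmorph0.
- subst m; rewrite /= subnn mulr0 oppr0 add0r; symmetry; exact: rmorph1.
Qed.

Lemma natr_false (D : unitRingType) : (false%:R : D) = 0. Proof. by []. Qed.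
Lemma natr_true (D : unitRingType) : (true%:R : D) = 1. Proof. by []. Qed.

Lemma N_of_rightseq (D : unitRingType) (s : {rmorphism D -> D}) m (a b : D)
  (u : nat -> D) K :
  (forall k, (K <= k)%N -> u k = 0) ->
  ('X^m - a%:P)`_0 = - (u 0%N * b) ->
  (forall k, ('X^m - a%:P)`_k.+1 = u k - u k.+1 * iter k.+1 s b) ->
  Nm s m b = a.
Proof.
move=> hK h0 hS.
have hz : forall n k, (m <= k)%N -> (K <= k + n)%N -> u k = 0.
  elim=> [|n IH] k hm hk; first by apply: hK; rewrite addn0 in hk.
  have := hS k; rewrite (IH k.+1); [|lia|lia].
  rewrite mul0r subr0 coef_f /= (_ : (k.+1 == m) = false); last by apply/eqP; lia.
  by rewrite subr0 => <-.
have {}hz : forall k, (m <= k)%N -> u k = 0.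
  by move=> k hk; apply: (hz K) => //; lia.
move: h0; rewrite coef_f /=.
case: m hS hz => [|m] hS hz.
  by rewrite hz // mul0r oppr0 /= => /eqP; rewrite subr_eq0 => /eqP <-.
have hm : u m = 1.
  by have := hS m; rewrite coef_f /= eqxx (hz m.+1) // mul0r subr0 subr0 => <-.
have claim : forall j, (j <= m)%N -> u (m - j)%N = Nm s j (iter (m - j).+1 s b).
  elim=> [|j IH] hj; first by rewrite subn0 hm.
  have := hS (m - j.+1)%N; rewrite coef_f /= subr0.
  rewrite (_ : ((m - j.+1).+1 == m.+1) = false); last by apply/eqP; lia.
  rewrite (_ : (m - j.+1).+1 = (m - j))%N; last by lia.
  rewrite IH; last by lia.
  move/eqP; rewrite eq_sym subr_eq0 => /eqP ->.
  rewrite (_ : (m - j)%N = (m - j.+1).+1); last by lia.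
  by rewrite -[RHS]/(Nm s j.+1 (iter (m - j.+1).+1 s b)) Nm_Sr.
rewrite (_ : (((0 == m.+1)%N)%:R : D) = 0) // sub0r => /oppr_inj ->.
by rewrite -[0%N](subnn m) (claim m) // subnn Nm_Sr.
Qed.

Lemma N_of_leftseq (D : unitRingType) (s : {rmorphism D -> D}) (hs : injective s)
  m (a c : D) (v : nat -> D) K :
  (forall k, (K <= k)%N -> v k = 0) ->
  ('X^m - a%:P)`_0 = - (c * v 0%N) ->
  (forall k, ('X^m - a%:P)`_k.+1 = s (v k) - c * v k.+1) ->
  Nm s m c = iter m.-1 s a.
Proof.
move=> hK h0 hS.
have hz : forall n k, (m <= k)%N -> (K <= k + n)%N -> v k = 0.
  elim=> [|n IH] k hm hk; first by apply: hK; rewrite addn0 in hk.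
  have := hS k; rewrite (IH k.+1); [|lia|lia].
  rewrite mulr0 subr0 coef_f /= (_ : (k.+1 == m) = false); last by apply/eqP; lia.
  by rewrite subr0 => /esym h; apply: (hs); rewrite h natr_false rmorph0.
have {}hz : forall k, (m <= k)%N -> v k = 0.
  by move=> k hk; apply: (hz K) => //; lia.
move: h0; rewrite coef_f /=.
case: m hS hz => [|m] hS hz.
  by rewrite hz // mulr0 oppr0 /= => /eqP; rewrite subr_eq0 => /eqP <-.
have hm : v m = 1.
  have := hS m; rewrite coef_f /= eqxx (hz m.+1) // mulr0 subr0 subr0 => /esym.
  by rewrite natr_true => h; apply: (hs); rewrite h rmorph1.
have claim : forall j, (j <= m)%N -> iter j s (v (m - j)%N) = Nm s j c.
  elim=> [|j IH] hj; first by rewrite subn0 hm.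
  have := hS (m - j.+1)%N; rewrite coef_f /= subr0.
  rewrite (_ : ((m - j.+1).+1 == m.+1) = false); last by apply/eqP; lia.
  rewrite (_ : (m - j.+1).+1 = (m - j))%N; last by lia.
  move/eqP; rewrite eq_sym subr_eq0 => /eqP hh.
  by rewrite iterSC hh iterSM IH //; lia.
rewrite (_ : (((0 == m.+1)%N)%:R : D) = 0) // sub0r => /oppr_inj ->.
by rewrite /= iterSM -[0%N](subnn m) (claim m).
Qed.

Lemma g1_neq0 {D : unitRingType} (g : {poly D}) : size g = 2%N -> g`_1 != 0.
Proof.
move=> hg; have : lead_coef g != 0 by rewrite lead_coef_eq0 -size_poly_eq0 hg.
by rewrite lead_coefE hg.
Qed.

Lemma right_to_N (D : unitRingType) (hD : is_division_ring D)
  (s : {rmorphism D -> D}) m (a : D) (g : {poly D}) :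
  size g = 2%N -> skew_right_divisor s g ('X^m - a%:P) -> exists b, Nm s m b = a.
Proof.
move=> hg [h hf].
have u1 := hD _ (@g1_neq0 D g hg).
have sg : (size g <= 2)%N by rewrite hg.
exists (- ((g`_1)^-1 * g`_0)).
apply: (@N_of_rightseq D s m a _ (fun k => h`_k * iter k s g`_1) (size h)).
- by move=> k hk; rewrite nth_default ?mul0r.
- by rewrite hf skew0 /= mulrN opprK mulrA -(mulrA _ g`_1) mulrV // mulr1.
- move=> k; rewrite hf skewRS // iterSN iterSM mulrN opprK -!mulrA.
  by rewrite (mulrA (iter k.+1 s g`_1)) -iterSM mulrV // iterS1 mul1r addrC.
Qed.

Lemma left_to_N (D : unitRingType) (hD : is_division_ring D)
  (s : {rmorphism D -> D}) (hs : bijective s) m (a : D) (g : {poly D}) :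
  size g = 2%N -> skew_left_divisor s g ('X^m - a%:P) ->
  exists c, Nm s m c = iter m.-1 s a.
Proof.
move=> hg [h hf].
have [sinv K1 K2] := hs.
have sinj : injective s by apply: can_inj K1.
set e := sinv g`_1.
have he : s e = g`_1 by rewrite /e K2.
have e0 : e != 0.
  apply/eqP => e0; move: (@g1_neq0 D g hg); rewrite -he e0 rmorph0 eqxx //.
have eu := hD _ e0.
have sg : (size g <= 2)%N by rewrite hg.
exists (- (g`_0 * e^-1)).
apply: (@N_of_leftseq D s sinj m a _ (fun k => e * h`_k) (size h)).
- by move=> k hk; rewrite nth_default ?mulr0.
- by rewrite hf skew0 mulNr opprK -mulrA mulKr.
- move=> k; rewrite hf skewLS // rmorphM he mulNr opprK -mulrA mulKr //.
  by rewrite addrC.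
Qed.

Lemma iter_inj (T : Type) (f : T -> T) n : injective f -> injective (iter n f).
Proof. by move=> hf; elim: n => //= n IH x y /hf /IH. Qed.

Lemma iter_can (T : Type) (f g : T -> T) n : cancel g f -> forall x, iter n f (iter n g x) = x.
Proof. by move=> K; elim: n => //= n IH x; rewrite iterSC K IH. Qed.

Theorem mainTheorem13 (D : unitRingType) (hD : is_division_ring D)
  (sigma : {rmorphism D -> D}) (hsigma : bijective sigma)
  (m : nat) (a : D) :
  let f : {poly D} := 'X^m - a%:P in
  (exists g : {poly D}, size g = 2%N /\ skew_left_divisor sigma g f) <->
  (exists g : {poly D}, size g = 2%N /\ skew_right_divisor sigma g f).
Proof.
move=> f; split.
  case=> g [hg hl].
  have [c hc] := @left_to_N D hD sigma hsigma m a g hg hl.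
  have [sinv K1 K2] := hsigma.
  have sinj : injective sigma by apply: can_inj K1.
  set y := iter m.-1 sinv c.
  have hy : Nm sigma m y = a.
    apply: (@iter_inj _ _ m.-1 sinj).
    by rewrite Nm_iter /y iter_can.
  exists ('X - y%:P); split; first exact: size_XsubC.
  exact: right_of_N.
case=> g [hg hr].
have [b hb] := @right_to_N D hD sigma m a g hg hr.
exists ('X - (iter m.-1 sigma b)%:P); split; first exact: size_XsubC.
exact: left_of_N.
Qed.
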